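(* Let $Y,\widehat{Y},A$ be $\{0,1\}$-valued random variables on a common probability space, with $\Pr\{A=a,Y=y\}>0$ for all $a,y\in\{0,1\}$. For $a\in\{0,1\}$ let $P_a(\widehat{Y})=\mathrm{convhull}\{(0,0),\gamma_a(\widehat{Y}),\gamma_a(1-\widehat{Y}),(1,1)\}\subseteq\mathbb{R}^2$. Then: (i) every predictor $\widetilde{Y}$ derived from $(\widehat{Y},A)$ satisfies $\gamma_a(\widetilde{Y})\in P_a(\widehat{Y})$ for all $a\in\{0,1\}$; and (ii) conversely, for any points $g_0\in P_0(\widehat{Y})$ and $g_1\in P_1(\widehat{Y})$ there exists a predictor $\widetilde{Y}$ derived from $(\widehat{Y},A)$ with $\gamma_0(\widetilde{Y})=g_0$ and $\gamma_1(\widetilde{Y})=g_1$.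
   Context: For a $\{0,1\}$-valued predictor $Z$ and $a\in\{0,1\}$, $\gamma_a(Z)=\left(\Pr\{Z=1\mid A=a,Y=0\},\ \Pr\{Z=1\mid A=a,Y=1\}\right)$ (false positive rate and true positive rate within the group $A=a$). A predictor $\widetilde{Y}\in\{0,1\}$ is derived from $(\widehat{Y},A)$ if it is a possibly randomized function of $(\widehat{Y},A)$ alone, with the randomization independent of everything else; equivalently it is specified by the four numbers $\Pr\{\widetilde{Y}=1\mid \widehat{Y}=\hat y,A=a\}\in[0,1]$, $\hat y,a\in\{0,1\}$. *)

(* Defs.v *)
From HB Require Import structures.
From mathcomp Require Import all_boot all_order all_algebra.
From mathcomp Require Import all_classical all_reals all_analysis.
Set Implicit Arguments. Unset Strict Implicit. Unset Printing Implicit Defensive.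
Import Order.TTheory GRing.Theory Num.Theory.
Local Open Scope classical_set_scope.
Local Open Scope ring_scope.

Section Defs.
Context {d : measure_display} {T : measurableType d} {R : realType}.

Definition pr (P : probability T R) (E : set T) : R := fine (P E).

Definition condPr (P : probability T R) (E F : set T) : R :=
  pr P (E `&` F) / pr P F.

Definition evAY (A Y : T -> bool) (a y : bool) : set T :=
  [set w | A w = a /\ Y w = y].

(* gamma_a(Z) = (Pr{Z=1 | A=a,Y=0}, Pr{Z=1 | A=a,Y=1}) for a {0,1}-valued
   predictor Z (true encodes 1) *)
Definition gamma (P : probability T R) (A Y Z : T -> bool) (a : bool) : R * R :=
  (condPr P [set w | Z w] (evAY A Y a false),
   condPr P [set w | Z w] (evAY A Y a true)).

(* A derived predictor Ytilde is specified by q : bool -> bool -> R with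
   q yh a = Pr{Ytilde = 1 | Yhat = yh, A = a} in [0,1], the randomization being
   independent of everything else.  Its conditional probabilities are
   Pr{Ytilde=1 | A=a, Y=y}
     = sum_yh q yh a * Pr{Yhat=yh, A=a, Y=y} / Pr{A=a, Y=y}. *)
Definition derived_condPr (P : probability T R) (A Y Yh : T -> bool)
  (q : bool -> bool -> R) (a y : bool) : R :=
  (\sum_(yh : bool) q yh a * pr P ([set w | Yh w = yh] `&` evAY A Y a y))
  / pr P (evAY A Y a y).

Definition gamma_derived (P : probability T R) (A Y Yh : T -> bool)
  (q : bool -> bool -> R) (a : bool) : R * R :=
  (derived_condPr P A Y Yh q a false, derived_condPr P A Y Yh q a true).

Definition is_derived_rule (q : bool -> bool -> R) : Prop :=
  forall yh a, 0 <= q yh a <= 1.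

End Defs.

Definition convhull4 {R : realType} (p0 p1 p2 p3 : R * R) : set (R * R) :=
  [set g | exists l0 l1 l2 l3 : R,
     [/\ 0 <= l0, 0 <= l1, 0 <= l2 & 0 <= l3] /\ l0 + l1 + l2 + l3 = 1 /\
     g = (l0 * p0.1 + l1 * p1.1 + l2 * p2.1 + l3 * p3.1,
          l0 * p0.2 + l1 * p1.2 + l2 * p2.2 + l3 * p3.2)].

Definition Pa {d : measure_display} {T : measurableType d} {R : realType}
  (P : probability T R) (A Y Yh : T -> bool) (a : bool) : set (R * R) :=
  convhull4 (0, 0) (gamma P A Y Yh a) (gamma P A Y (fun w => ~~ Yh w) a) (1, 1).

(* Main.v *)
Require Import Defs.
From HB Require Import structures.
From mathcomp Require Import all_boot all_order all_algebra.
From mathcomp Require Import all_classical all_reals all_analysis.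
From mathcomp Require Import ring lra.
Import Order.TTheory GRing.Theory Num.Theory.
Local Open Scope classical_set_scope.
Local Open Scope ring_scope.

Section H.
Context (d : measure_display) (T : measurableType d) (R : realType)
  (P : probability T R).

Lemma mpre (X : T -> bool) (b : bool) : measurable_fun [set: T] X ->
  measurable [set w | X w = b].
Proof.
move=> mX; have := mX measurableT [set b] I.
by rewrite setTI.
Qed.

Lemma meas_ev (A Y : T -> bool) a y : measurable_fun [set: T] A ->
  measurable_fun [set: T] Y -> measurable (evAY A Y a y).
Proof.
move=> mA mY.
have -> : evAY A Y a y = [set w | A w = a] `&` [set w | Y w = y] by [].
by apply: measurableI; apply: mpre.
Qed.

Lemma split_pr (X : T -> bool) (E : set T) : measurable_fun [set: T] X ->
  measurable E ->
  pr P ([set w | X w = true] `&` E) + pr P ([set w | X w = false] `&` E)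
  = pr P E.
Proof.
move=> mX mE.
have m1 : measurable ([set w | X w = true] `&` E) by apply: measurableI => //; apply: mpre.
have m2 : measurable ([set w | X w = false] `&` E) by apply: measurableI => //; apply: mpre.
rewrite /pr -fineD; try exact: fin_num_measure.
rewrite -measureU //.
  congr (fine (P _)); apply/seteqP; split => w /=.
    by case=> -[]...
  by move=> Ew; case: (X w); [left|right].
apply/seteqP; split => w //= [[-> _] [+ _]] //.
Qed.

End H.

Lemma alg1 (R : realType) (qT qF t0 f0 n0 t1 f1 n1 : R) :
  t0 + f0 = n0 -> t1 + f1 = n1 -> 0 < n0 -> 0 < n1 ->
  0 <= qT <= 1 -> 0 <= qF <= 1 ->
  convhull4 (0, 0) (t0/n0, t1/n1) (f0/n0, f1/n1) (1, 1)
    ((qT * t0 + qF * f0) / n0, (qT * t1 + qF * f1) / n1).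
Proof.
move=> h0 h1 p0 p1 /andP[qT0 qT1] /andP[qF0 qF1].
have n0z : n0 != 0 by rewrite gt_eqF.
have n1z : n1 != 0 by rewrite gt_eqF.
case: (leP qF qT) => hq.
  exists (1 - qT), (qT - qF), 0, qF; split; [split; lra|split; [ring|]].
  rewrite /=; subst n0 n1; congr pair; field; rewrite ?gt_eqF //.
exists (1 - qF), 0, (qF - qT), qT; split; [split; lra|split; [ring|]].
rewrite /=; subst n0 n1; congr pair; field; rewrite ?gt_eqF //.
Qed.

Lemma alg2 (R : realType) (g : R * R) (t0 f0 n0 t1 f1 n1 : R) :
  t0 + f0 = n0 -> t1 + f1 = n1 -> 0 < n0 -> 0 < n1 ->
  convhull4 (0, 0) (t0/n0, t1/n1) (f0/n0, f1/n1) (1, 1) g ->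
  exists qT qF : R, (0 <= qT <= 1) /\ (0 <= qF <= 1) /\
    g = ((qT * t0 + qF * f0) / n0, (qT * t1 + qF * f1) / n1).
Proof.
move=> h0 h1 p0 p1 [l0 [l1 [l2 [l3 [[a0 a1 a2 a3] [hs ->]]]]]].
exists (l1 + l3), (l2 + l3); split; [apply/andP; split; lra|].
split; [apply/andP; split; lra|].
rewrite /=; subst n0 n1; congr pair; field; rewrite ?gt_eqF //.
Qed.

Theorem lemma4p3 (d : measure_display) (T : measurableType d) (R : realType)
  (P : probability T R) (Y Yh A : T -> bool)
  (mY : measurable_fun [set: T] Y) (mYh : measurable_fun [set: T] Yh)
  (mA : measurable_fun [set: T] A)
  (hpos : forall a y : bool, (0 < P (evAY A Y a y))%E) :
  (forall q : bool -> bool -> R, is_derived_rule q ->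
     forall a : bool, Pa P A Y Yh a (gamma_derived P A Y Yh q a)) /\
  (forall g0 g1 : R * R, Pa P A Y Yh false g0 -> Pa P A Y Yh true g1 ->
     exists q : bool -> bool -> R, is_derived_rule q /\
       gamma_derived P A Y Yh q false = g0 /\
       gamma_derived P A Y Yh q true = g1).
Proof.
pose pt a y := pr P ([set w | Yh w = true] `&` evAY A Y a y).
pose pf a y := pr P ([set w | Yh w = false] `&` evAY A Y a y).
pose pn a y := pr P (evAY A Y a y).
have hs a y : pt a y + pf a y = pn a y.
  by apply: split_pr => //; apply: meas_ev.
have hp a y : 0 < pn a y.
  apply: fine_gt0; rewrite hpos /=; apply: (le_lt_trans (probability_le1 _ _)).
    exact: meas_ev.
  by rewrite ltry.
have hnot : [set w | ~~ Yh w] = [set w | Yh w = false].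
  by apply/seteqP; split => w /=; case: (Yh w).
have PaE a : Pa P A Y Yh a = convhull4 (0, 0) (pt a false / pn a false, pt a true / pn a true)
   (pf a false / pn a false, pf a true / pn a true) (1, 1).
  by rewrite /Pa /gamma /condPr hnot.
have gdE q a : gamma_derived P A Y Yh q a =
  ((q true a * pt a false + q false a * pf a false) / pn a false,
   (q true a * pt a true + q false a * pf a true) / pn a true).
  by rewrite /gamma_derived /derived_condPr !big_bool.
split.
  move=> q hq a; rewrite PaE gdE; apply: alg1 => //; exact: hq.
move=> g0 g1; rewrite !PaE => /alg2 h0 /alg2 h1.
have [qT0 [qF0 [hT0 [hF0 e0]]]] := h0 (hs _ _) (hs _ _) (hp _ _) (hp _ _).
have [qT1 [qF1 [hT1 [hF1 e1]]]] := h1 (hs _ _) (hs _ _) (hp _ _) (hp _ _).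
exists (fun yh a => if a then (if yh then qT1 else qF1) else (if yh then qT0 else qF0)).
split; first by case; case.
by rewrite !gdE e0 e1.
Qed.
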